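(* Consider a discrete-time model $t=0,1,2,\ldots$ of a company's Short Term Net Financial Position (STNFP) $D_{S,t}$, along a fixed realization, evolving by $$D_{S,t}=D_{S,t-1}-C_t,\qquad C_t=F_t-S_t,\qquad S_t=c_t+I_{L,t}+I_{S,t},\qquad t\ge 1,$$ where $F_t$ is the free cash flow at time $t$, $c_t+I_{L,t}$ is the term-debt service at time $t$, and $I_{S,t}=\mathbf r\, D_{S,t-1}$ is the interest paid at time $t$ on the STNFP outstanding at the beginning of the period, with a constant interest rate $\mathbf r\in(0,1)$. Assume there is a time $t_{SS}$ such that $F_t=F$ is constant for all $t\ge t_{SS}$, and assume $K:=c_t+I_{L,t}$ is the same constant for all $t$. If at some time $\bar t\ge t_{SS}$ the STNFP is decreasing, i.e. $D_{S,\bar t}< D_{S,\bar t-1}$, then $D_{S,t}< D_{S,t-1}$ for all $t\ge\bar t$.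
   Context: $D_{S,t}$ denotes the short-term net financial position (short-term debt) at time $t$; $C_t$ is its change (cash surplus) at time $t$. All quantities are real numbers along a given realization of the random cash flows. *)

(* Defs.v *)
From Stdlib Require Import Reals.
Open Scope R_scope.

(* Main.v *)
Require Import Defs.
From Stdlib Require Import Reals Lra Lia Psatz.
Open Scope R_scope.

Lemma aux_succ (a k : nat) : (a + S k = a + k + 1)%nat.
Proof. lia. Qed.

Theorem corollaryA1
  (DS C F S c IL IS : nat -> R) (r Fss K : R) (tSS tbar : nat)
  (hr : 0 < r < 1)
  (hD : forall t : nat, (1 <= t)%nat -> DS t = DS (t - 1)%nat - C t)
  (hC : forall t : nat, (1 <= t)%nat -> C t = F t - S t)
  (hS : forall t : nat, (1 <= t)%nat -> S t = c t + IL t + IS t)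
  (hIS : forall t : nat, (1 <= t)%nat -> IS t = r * DS (t - 1)%nat)
  (hF : forall t : nat, (tSS <= t)%nat -> F t = Fss)
  (hK : forall t : nat, c t + IL t = K)
  (htbar : (tSS <= tbar)%nat)
  (htbar1 : (1 <= tbar)%nat)
  (hdec : DS tbar < DS (tbar - 1)%nat) :
  forall t : nat, (tbar <= t)%nat -> DS t < DS (t - 1)%nat.
Proof.
  assert (Hrec : forall t, (tSS <= t)%nat -> (1 <= t)%nat ->
            DS t = (1 + r) * DS (t - 1)%nat + K - Fss).
  { intros t h1 h2. rewrite (hD t h2), (hC t h2), (hS t h2), (hIS t h2), (hK t), (hF t h1). ring. }
  intros t Ht.
  replace t with (tbar + (t - tbar))%nat by lia.
  generalize (t - tbar)%nat as k. clear t Ht.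
  induction k as [|k IH].
  - replace (tbar + 0)%nat with tbar by lia. exact hdec.
  - rewrite aux_succ.
    assert (E1 := Hrec (tbar + k + 1)%nat ltac:(lia) ltac:(lia)).
    assert (Eq : (tbar + k + 1 - 1)%nat = (tbar + k)%nat) by lia.
    rewrite Eq in E1 |- *.
    assert (E2 := Hrec (tbar + k)%nat ltac:(lia) ltac:(lia)).
    rewrite E1. nra.
Qed.
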